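(* Let $z_1,\dots,z_m\in\partial\mathbb{D}$ be distinct, $\mu=\sum_{j=1}^m\mu_j\delta_{z_j}$ with $\mu_j>0$, $\sum\mu_j=1$, and $G$ real-valued on $\{z_1,\dots,z_m\}$, numbered so that $G(z_1)\ge\cdots\ge G(z_m)$. Let $K_1,\dots,K_L$ be the $K$-groups $K_i=\{k_{i-1}+1,\dots,k_i\}$ ($k_0=0$, $k_L=m$), i.e. maximal blocks of consecutive indices on which $G(z_\cdot)$ is constant. Let $\mu_t=e^{tG}\mu/\int e^{tG}d\mu$, and let $\mu^{(K_i)}=\sum_{\ell\in K_i}\mu^{(K_i)}_\ell\delta_{z_\ell}$ with \[ \mu^{(K_i)}_\ell=\frac{\bigl[\prod_{p=1}^{k_{i-1}}|z_\ell-z_p|^2\bigr]\mu_\ell}{\sum_{r\in K_i}\bigl[\prod_{p=1}^{k_{i-1}}|z_r-z_p|^2\bigr]\mu_r}. \] Then for every $i$ and $\ell\in K_i$, coefficientwise (equivalently, uniformly on compact subsets of $\mathbb{C}$), \[ \lim_{t\to\infty}\Phi_\ell(z;\mu_t)=\prod_{p=1}^{k_{i-1}}(z-z_p)\;\Phi_{\ell-k_{i-1}}(z;\mu^{(K_i)}). \]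
   Context: $\Phi_n(z;\nu)$ denotes the monic orthogonal polynomial of degree $n$ for a positive measure $\nu$ on $\partial\mathbb{D}$ whose support has at least $n$ points; $\Phi_0=1$; empty products equal $1$. *)

(* Defs.v *)
From HB Require Import structures.
From mathcomp Require Import all_boot all_order all_algebra.
From mathcomp Require Import all_classical all_reals all_analysis.
From mathcomp Require Import complex.
Set Implicit Arguments. Unset Strict Implicit. Unset Printing Implicit Defensive.
Import Order.TTheory GRing.Theory Num.Theory ComplexField.
Local Open Scope ring_scope.

(* A positive finite atomic measure on the unit circle, given by points
   x 1, ..., x m and weights w 1, ..., w m (>= 0):  nu = sum_j w j delta_(x j). *)
Definition is_monic_OP (R : rcfType) (m : nat) (x : nat -> R[i]) (w : nat -> R)
    (n : nat) (P : {poly R[i]}) : Prop :=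
  [/\ P \is monic, size P = n.+1 &
      forall k : nat, (k < n)%N ->
        \sum_(1 <= j < m.+1) ((w j)%:C)%C * P.[x j] * ((x j) ^+ k)^* = 0].

(* Phi_n(z; nu): the monic orthogonal polynomial (chosen; unique whenever the
   support has at least n points); 0 if it does not exist (never used then). *)
Definition Phi (R : rcfType) (m : nat) (x : nat -> R[i]) (w : nat -> R)
    (n : nat) : {poly R[i]} :=
  match pselect (exists P, is_monic_OP m x w n P) with
  | left H => proj1_sig (cid H)
  | right _ => 0
  end.

Definition mu_t (R : realType) (m : nat) (z : nat -> R[i]) (mu : nat -> R)
    (G : R[i] -> R) (t : R) (j : nat) : R :=
  expR (t * G (z j)) * mu j / \sum_(1 <= r < m.+1) expR (t * G (z r)) * mu r.

(* weights of mu^(K_i), K_i = {a+1, ..., b} with a = k_{i-1}, b = k_i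
   (zero weight outside K_i) *)
Definition muK (R : rcfType) (z : nat -> R[i]) (mu : nat -> R) (a b : nat)
    (l : nat) : R :=
  if (a < l <= b)%N then
    (\prod_(1 <= p < a.+1) complex.Re (`|z l - z p| ^+ 2)) * mu l /
    \sum_(a.+1 <= r < b.+1) (\prod_(1 <= p < a.+1) complex.Re (`|z r - z p| ^+ 2)) * mu r
  else 0.

Definition cvg_pinfty (R : realType) (f : R -> R[i]) (l : R[i]) : Prop :=
  forall e : R, 0 < e -> exists T : R, forall t : R, T <= t -> `|f t - l| < (e%:C)%C.

(* Main.v *)
Require Import Defs.
From HB Require Import structures.
From mathcomp Require Import all_boot all_order all_algebra.
From mathcomp Require Import all_classical all_reals all_analysis.
From mathcomp Require Import complex.
Import Order.TTheory GRing.Theory Num.Theory ComplexField.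
Local Open Scope ring_scope.
Set Warnings "-notation-overridden -ambiguous-paths -notation-incompatible-prefix".
From mathcomp Require Import ring lra zify.
Set Implicit Arguments. Unset Strict Implicit. Unset Printing Implicit Defensive.

Definition ip (R : rcfType) (m : nat) (x : nat -> R[i]) (w : nat -> R)
  (P Q : {poly R[i]}) : R[i] :=
  \sum_(1 <= j < m.+1) ((w j)%:C)%C * P.[x j] * (Q.[x j])^*.

Lemma conjR (R : rcfType) (r : R) : ((r%:C)%C)^* = (r%:C)%C.
Proof. apply: conj_Creal; apply/complex_realP; by exists r. Qed.

Lemma ipDl (R : rcfType) m x w (P1 P2 Q : {poly R[i]}) :
  ip m x w (P1 + P2) Q = ip m x w P1 Q + ip m x w P2 Q.
Proof. rewrite /ip -big_split /=; apply: eq_bigr => j _; rewrite hornerD; ring. Qed.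

Lemma ipNl (R : rcfType) m x w (P Q : {poly R[i]}) :
  ip m x w (- P) Q = - ip m x w P Q.
Proof. rewrite /ip -sumrN /=; apply: eq_bigr => j _; rewrite hornerN; ring. Qed.

Lemma ipDr (R : rcfType) m x w (P Q1 Q2 : {poly R[i]}) :
  ip m x w P (Q1 + Q2) = ip m x w P Q1 + ip m x w P Q2.
Proof. rewrite /ip -big_split /=; apply: eq_bigr => j _; rewrite hornerD rmorphD; ring. Qed.

Lemma ipNr (R : rcfType) m x w (P Q : {poly R[i]}) :
  ip m x w P (- Q) = - ip m x w P Q.
Proof. rewrite /ip -sumrN /=; apply: eq_bigr => j _; rewrite hornerN rmorphN; ring. Qed.

Lemma ipBl (R : rcfType) m x w (P1 P2 Q : {poly R[i]}) :
  ip m x w (P1 - P2) Q = ip m x w P1 Q - ip m x w P2 Q.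
Proof. by rewrite ipDl ipNl. Qed.

Lemma ipBr (R : rcfType) m x w (P Q1 Q2 : {poly R[i]}) :
  ip m x w P (Q1 - Q2) = ip m x w P Q1 - ip m x w P Q2.
Proof. by rewrite ipDr ipNr. Qed.

Lemma ip_conj (R : rcfType) m x w (P Q : {poly R[i]}) :
  ip m x w Q P = (ip m x w P Q)^*.
Proof.
rewrite /ip rmorph_sum; apply: eq_bigr => j _.
by rewrite !rmorphM /= conjCK conjR; ring.
Qed.

Lemma ip_wD (R : rcfType) m x (w1 w2 : nat -> R) (P Q : {poly R[i]}) :
  ip m x (fun j => w1 j + w2 j) P Q = ip m x w1 P Q + ip m x w2 P Q.
Proof. rewrite /ip -big_split /=; apply: eq_bigr => j _; rewrite rmorphD; ring. Qed.

Lemma ip_weq (R : rcfType) m x (w1 w2 : nat -> R) (P Q : {poly R[i]}) :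
  (forall j, (1 <= j <= m)%N -> w1 j = w2 j) ->
  ip m x w1 P Q = ip m x w2 P Q.
Proof.
move=> H; rewrite /ip; apply: eq_big_nat => j /andP[j1 jm].
by rewrite H // j1 -ltnS.
Qed.

Lemma ip_self (R : rcfType) m x w (P : {poly R[i]}) :
  ip m x w P P = \sum_(1 <= j < m.+1) ((w j)%:C)%C * `|P.[x j]| ^+ 2.
Proof. rewrite /ip; apply: eq_bigr => j _; by rewrite normCK mulrA. Qed.

Lemma ip_term_le (R : rcfType) m x w (P : {poly R[i]}) j0 :
  (forall j, (1 <= j <= m)%N -> 0 <= w j) -> (1 <= j0 <= m)%N ->
  ((w j0)%:C)%C * `|P.[x j0]| ^+ 2 <= ip m x w P P.
Proof.
move=> Hw Hj0; rewrite ip_self (bigD1_seq j0) /=; last exact: iota_uniq.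
- rewrite lerDl big_seq_cond; apply: sumr_ge0 => j /andP[]; rewrite mem_index_iota => Hj _.
  apply: mulr_ge0; last exact: exprn_ge0.
  by rewrite ler0c Hw // -ltnS.
- by rewrite mem_index_iota ltnS.
Qed.

Lemma ip_ge0 (R : rcfType) m x w (P : {poly R[i]}) :
  (forall j, (1 <= j <= m)%N -> 0 <= w j) -> 0 <= ip m x w P P.
Proof.
move=> Hw; rewrite ip_self big_seq; apply: sumr_ge0 => j; rewrite mem_index_iota => Hj.
apply: mulr_ge0; last exact: exprn_ge0.
by rewrite ler0c Hw // -ltnS.
Qed.


Lemma cR_eq0 (R : rcfType) (r : R) : (((r%:C)%C : R[i]) == 0) = (r == 0).
Proof. by apply/eqP/eqP => [[]|->]. Qed.

Lemma OP_orth (R : rcfType) m x w n (P q : {poly R[i]}) :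
  is_monic_OP m x w n P -> (size q <= n)%N -> ip m x w P q = 0.
Proof.
case=> _ _ H Hq; rewrite /ip.
under eq_bigr => j _ do rewrite (horner_coef_wide _ Hq) rmorph_sum mulr_sumr.
rewrite exchange_big /=; apply: big1 => k _.
transitivity ((q`_k)^* * \sum_(1 <= j < m.+1) ((w j)%:C)%C * P.[x j] * (x j ^+ k)^*);
  last by rewrite (H k (ltn_ord k)) mulr0.
rewrite mulr_sumr; apply: eq_bigr => j _; rewrite rmorphM /=; ring.
Qed.

Lemma size_sub_monic (R : nzRingType) n (Sp P : {poly R}) :
  Sp \is monic -> P \is monic -> size Sp = n.+1 -> size P = n.+1 ->
  (size (Sp - P)%R <= n)%N.
Proof.
move=> mS mP sS sP; apply/leq_sizeP => j Hj; rewrite coefB.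
move: Hj; rewrite leq_eqVlt => /orP[/eqP <-|jn]; last by rewrite !nth_default ?subrr // ?sS ?sP.
have : lead_coef Sp = lead_coef P by rewrite (eqP mS) (eqP mP).
by rewrite /lead_coef sS sP /= => ->; rewrite subrr.
Qed.

Lemma pythag (R : rcfType) m x w n (P Sp : {poly R[i]}) :
  is_monic_OP m x w n P -> Sp \is monic -> size Sp = n.+1 ->
  ip m x w Sp Sp = ip m x w P P + ip m x w (Sp - P) (Sp - P).
Proof.
move=> HP mS sS; have [mP sP _] := HP.
have hD : (size (Sp - P)%R <= n)%N by exact: size_sub_monic.
have oD := OP_orth HP hD.
have oD' : ip m x w (Sp - P) P = 0 by rewrite ip_conj oD conjC0.
move: oD oD'; set D := Sp - P => oD oD'.
have eS : Sp = P + D by rewrite /D addrC subrK.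
clearbody D; rewrite eS ipDl !ipDr oD oD'; ring.
Qed.

Lemma ip0_poly0 (R : rcfType) m x w (s : seq nat) (q : {poly R[i]}) :
  (forall j, (1 <= j <= m)%N -> 0 <= w j) ->
  (forall j, j \in s -> (1 <= j <= m)%N && (0 < w j)) ->
  uniq (map x s) -> (size q <= size s)%N -> ip m x w q q = 0 -> q = 0.
Proof.
move=> Hw Hs us sq H0.
have Hr : forall j, j \in s -> root q (x j).
  move=> j /Hs /andP[jm wj].
  have := ip_term_le x q Hw jm; rewrite H0 => hle.
  have hge : 0 <= ((w j)%:C)%C * `|q.[x j]| ^+ 2.
    by apply: mulr_ge0; [rewrite ler0c ltW | exact: exprn_ge0].
  have : ((w j)%:C)%C * `|q.[x j]| ^+ 2 = 0 by apply/eqP; rewrite eq_le hle hge.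
  move/eqP; rewrite mulf_eq0 => /orP[|].
    by rewrite cR_eq0 gt_eqF.
  by rewrite expf_eq0 /= normr_eq0 => /eqP; rewrite /root => ->.
apply/eqP; apply/negPn/negP => q0.
have := max_poly_roots q0 _ us.
rewrite size_map => /(_ _) H.
have : (size s < size q)%N.
  apply: H; apply/allP => y /mapP[j js ->]; exact: Hr.
by rewrite ltnNge sq.
Qed.

Lemma Phi_spec (R : rcfType) m x w n :
  (exists P : {poly R[i]}, is_monic_OP m x w n P) -> is_monic_OP m x w n (Phi m x w n).
Proof.
move=> H; rewrite /Phi; case: pselect => [H'|//].
exact: (proj2_sig (cid H')).
Qed.

Lemma OP_scale (R : rcfType) m x (w w' : nat -> R) (c : R) n (P : {poly R[i]}) :
  c != 0 -> (forall j, w' j = c * w j) ->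
  is_monic_OP m x w' n P -> is_monic_OP m x w n P.
Proof.
move=> c0 Hw [mP sP H]; split => // k kn.
rewrite (eq_bigr (fun j => ((w j)%:C)%C * (P.[x j] * (x j ^+ k)^* ))); last first.
  by move=> j _; rewrite mulrA.
have Hk := H k kn.
rewrite (eq_bigr (fun j => ((c%:C)%C) * (((w j)%:C)%C * (P.[x j] * (x j ^+ k)^* )))) in Hk; last first.
  by move=> j _; rewrite Hw rmorphM; ring.
rewrite -mulr_sumr in Hk.
move/eqP: Hk; rewrite mulf_eq0 => /orP[|/eqP //].
by rewrite cR_eq0 (negbTE c0).
Qed.


Lemma ip_suml (R : rcfType) m x w n (F : 'I_n -> {poly R[i]}) Q :
  ip m x w (\sum_(r < n) F r) Q = \sum_(r < n) ip m x w (F r) Q.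
Proof.
rewrite /ip.
under eq_bigr => j _ do rewrite horner_sum mulr_sumr mulr_suml.
by rewrite exchange_big.
Qed.

Lemma ip_sumr (R : rcfType) m x w n (F : 'I_n -> {poly R[i]}) P :
  ip m x w P (\sum_(r < n) F r) = \sum_(r < n) ip m x w P (F r).
Proof.
rewrite ip_conj ip_suml rmorph_sum; apply: eq_bigr => r _.
by rewrite [RHS]ip_conj.
Qed.

Lemma ipZl (R : rcfType) m x w (c : R[i]) P Q :
  ip m x w (c *: P) Q = c * ip m x w P Q.
Proof. rewrite /ip mulr_sumr; apply: eq_bigr => j _; rewrite hornerZ; ring. Qed.

Lemma ipZr (R : rcfType) m x w (c : R[i]) P Q :
  ip m x w P (c *: Q) = c^* * ip m x w P Q.
Proof. by rewrite ip_conj ipZl rmorphM [in RHS]ip_conj. Qed.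

Lemma OP_exists (R : rcfType) m x w n (s : seq nat) :
  (forall j, (1 <= j <= m)%N -> 0 <= w j) ->
  (forall j, j \in s -> (1 <= j <= m)%N && (0 < w j)) ->
  uniq (map x s) -> (n <= size s)%N ->
  exists P : {poly R[i]}, is_monic_OP m x w n P.
Proof.
move=> Hw Hs us ns.
pose A : 'M[R[i]]_n := \matrix_(r < n, k < n) ip m x w 'X^r 'X^k.
pose b : 'rV[R[i]]_n := \row_(k < n) (- ip m x w 'X^n 'X^k).
pose E (v : 'rV[R[i]]_n) (r : nat) : R[i] :=
  if @insub _ _ 'I_n r is Some i then v ord0 i else 0.
have EE : forall v (r : 'I_n), E v r = v ord0 r.
  by move=> v r; rewrite /E valK.
pose qv (v : 'rV[R[i]]_n) : {poly R[i]} := \poly_(r < n) E v r.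
have qvE : forall v, qv v = \sum_(r < n) v ord0 r *: 'X^r.
  move=> v; rewrite /qv poly_def; apply: eq_bigr => r _.
  by rewrite EE.
have keyA : forall v k, (v *m A) ord0 k = ip m x w (qv v) 'X^k.
  move=> v k; rewrite qvE ip_suml !mxE; apply: eq_bigr => r _.
  by rewrite ipZl mxE.
have uA : A \in unitmx.
  rewrite unitmxE unitfE; apply/negP => /det0P [v v0 vA].
  have H0 : ip m x w (qv v) (qv v) = 0.
    rewrite {2}qvE ip_sumr; apply: big1 => k _.
    by rewrite ipZr -keyA vA mxE mulr0.
  have := ip0_poly0 Hw Hs us (leq_trans (size_poly _ _) ns) H0.
  move=> q0; move/negP: v0; apply; apply/eqP/matrixP => i k.
  rewrite (ord1 i) mxE.
  have := congr1 (fun p : {poly R[i]} => p`_k) q0.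
  by rewrite /qv coef_poly ltn_ord EE coef0.
pose v := b *m invmx A.
have vA : v *m A = b by rewrite /v mulmxKV.
exists ('X^n + qv v).
have sq : (size (qv v) < size ('X^n : {poly R[i]}))%N.
  by rewrite size_polyXn ltnS size_poly.
split.
- by rewrite monicE lead_coefDl // lead_coefXn.
- by rewrite size_addl // size_polyXn.
- move=> k kn.
  have -> : \sum_(1 <= j < m.+1) ((w j)%:C)%C * ('X^n + qv v).[x j] * (x j ^+ k)^*
          = ip m x w ('X^n + qv v) 'X^k.
    by rewrite /ip; apply: eq_bigr => j _; rewrite hornerXn.
  rewrite ipDl.
  have := keyA v (Ordinal kn); rewrite vA !mxE /= => <-.
  by rewrite subrr.
Qed.


Definition Lag (F : fieldType) (s : seq F) (y : F) : {poly F} :=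
  (\prod_(y' <- s | y' != y) (y - y'))^-1 *: \prod_(y' <- s | y' != y) ('X - y'%:P).

Lemma Lag_at (F : fieldType) (s : seq F) y y' : uniq s -> y \in s -> y' \in s ->
  (Lag s y).[y'] = (y' == y)%:R.
Proof.
move=> us ys y's; rewrite /Lag hornerZ horner_prod.
case: eqP => [->|ne].
  rewrite [X in _ * X](eq_bigr (fun y'' => y - y'')); last by move=> i _; rewrite hornerXsubC.
  rewrite mulVf //; rewrite prodf_seq_neq0; apply/allP => i _; apply/implyP.
  by rewrite subr_eq0 eq_sym.
have -> : \prod_(i <- s | i != y) ('X - i%:P).[y'] = 0.
  rewrite -big_filter (bigD1_seq y') /=; first by rewrite hornerXsubC subrr mul0r.
    by rewrite mem_filter y's andbT; apply/eqP.
  exact: filter_uniq.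
by rewrite mulr0.
Qed.

Lemma size_Lag (F : fieldType) (s : seq F) y : y \in s -> (size (Lag s y) <= size s)%N.
Proof.
move=> ys; apply: leq_trans (size_scale_leq _ _) _.
rewrite -big_filter size_prod_XsubC size_filter.
have := count_predC (fun y' => y' != y) s.
have : (0 < count (predC (fun y' => y' != y)) s)%N.
  rewrite -has_count; apply/hasP; exists y => //=; by rewrite negbK.
move=> h1 h2; rewrite -h2; rewrite -addn1 leq_add2l //.
Qed.

Lemma interp (F : fieldType) (s : seq F) (p : {poly F}) :
  uniq s -> (size p <= size s)%N ->
  p = \sum_(y <- s) p.[y] *: Lag s y.
Proof.
move=> us sp; apply/eqP; rewrite -subr_eq0; apply/eqP.
set d := p - _.
have sd : (size d <= size s)%N.
  apply: leq_trans (size_polyD _ _) _; rewrite geq_max sp /= size_polyN.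
  rewrite big_seq; apply: (big_ind (fun q : {poly F} => (size q <= size s)%N)).
  - by rewrite size_poly0.
  - by move=> q1 q2 h1 h2; apply: leq_trans (size_polyD _ _) _; rewrite geq_max h1 h2.
  - by move=> y ys; apply: leq_trans (size_scale_leq _ _) (size_Lag ys).
have rd : all (root d) s.
  apply/allP => y ys; rewrite /root /d hornerD hornerN horner_sum.
  rewrite (bigD1_seq y) //= hornerZ Lag_at // eqxx mulr1 big1_seq ?addr0 ?subrr //.
  by move=> y' /andP[ne y's]; rewrite hornerZ Lag_at // eq_sym (negbTE ne) mulr0.
apply/eqP; apply/negPn/negP => d0.
by have := max_poly_roots d0 rd us; rewrite ltnNge sd.
Qed.

Lemma interp_coef (F : fieldType) (s : seq F) (p : {poly F}) c :
  uniq s -> (size p <= size s)%N ->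
  p`_c = \sum_(y <- s) p.[y] * (Lag s y)`_c.
Proof.
move=> us sp; rewrite {1}(interp us sp) coef_sum.
by apply: eq_bigr => y _; rewrite coefZ.
Qed.

Definition nrm (R : rcfType) (x : R[i]) : R := Normc.normc x.

Lemma normE (R : rcfType) (x : R[i]) : `|x| = ((nrm x)%:C)%C.
Proof. by []. Qed.

Lemma nrm_ge0 (R : rcfType) (x : R[i]) : 0 <= nrm x.
Proof. by rewrite -ler0c -normE normr_ge0. Qed.

Lemma nrmD (R : rcfType) (x y : R[i]) : nrm (x + y) <= nrm x + nrm y.
Proof. by rewrite -lecR rmorphD -!normE ler_normD. Qed.

Lemma nrmM (R : rcfType) (x y : R[i]) : nrm (x * y) = nrm x * nrm y.
Proof. by apply: complexI; rewrite rmorphM -!normE normrM. Qed.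

Lemma nrmN (R : rcfType) (x : R[i]) : nrm (- x) = nrm x.
Proof. by apply: complexI; rewrite -!normE normrN. Qed.

Lemma nrmJ (R : rcfType) (x : R[i]) : nrm (x^*) = nrm x.
Proof. by apply: complexI; rewrite -!normE norm_conjC. Qed.

Lemma nrmX (R : rcfType) (x : R[i]) n : nrm (x ^+ n) = nrm x ^+ n.
Proof. by apply: complexI; rewrite rmorphXn -!normE normrX. Qed.

Lemma nrmR (R : rcfType) (r : R) : nrm ((r%:C)%C) = `|r|.
Proof. by rewrite /nrm /Normc.normc /= expr0n /= addr0 sqrtr_sqr. Qed.

Lemma nrm_sum (R : rcfType) (I : Type) (s : seq I) (F : I -> R[i]) :
  nrm (\sum_(i <- s) F i) <= \sum_(i <- s) nrm (F i).
Proof.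
elim: s => [|a s IH]; first by rewrite !big_nil /nrm Normc.normc0.
rewrite !big_cons; apply: le_trans (nrmD _ _) _; exact: lerD.
Qed.

Definition ev (R : realType) (P : R -> Prop) := exists T : R, forall t, T <= t -> P t.

Definition van (R : realType) (f : R -> R[i]) :=
  forall e : R, 0 < e -> ev (fun t => nrm (f t) < e).

Lemma ev_and (R : realType) (P Q : R -> Prop) : ev P -> ev Q -> ev (fun t => P t /\ Q t).
Proof.
move=> [T1 H1] [T2 H2]; exists (Num.max T1 T2) => t; rewrite ge_max => /andP[h1 h2].
by split; [apply: H1 | apply: H2].
Qed.

Lemma ev_imp (R : realType) (P Q : R -> Prop) : (forall t, P t -> Q t) -> ev P -> ev Q.
Proof. by move=> H [T HT]; exists T => t /HT /H. Qed.

Lemma ev_ge (R : realType) (T0 : R) : ev (fun t => T0 <= t).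
Proof. by exists T0. Qed.

Lemma van_le (R : realType) (f g : R -> R[i]) :
  van f -> ev (fun t => nrm (g t) <= nrm (f t)) -> van g.
Proof.
move=> vf hle e e0; apply: ev_imp (ev_and hle (vf e e0)) => t [h1 h2].
exact: le_lt_trans h1 h2.
Qed.

Lemma van_leR (R : realType) (f g : R -> R[i]) :
  van f -> ev (fun t => nrm (g t) <= nrm (f t)) -> van g.
Proof. exact: van_le. Qed.

Lemma van0 (R : realType) : van (fun _ : R => 0 : R[i]).
Proof. by move=> e e0; exists 0 => t _; rewrite /nrm Normc.normc0. Qed.

Lemma vanD (R : realType) (f g : R -> R[i]) : van f -> van g -> van (fun t => f t + g t).
Proof.
move=> vf vg e e0.
have e2 : 0 < e / 2 by rewrite divr_gt0.
apply: ev_imp (ev_and (vf _ e2) (vg _ e2)) => t [h1 h2].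
apply: le_lt_trans (nrmD _ _) _.
have -> : e = e / 2 + e / 2 by field.
exact: ltrD.
Qed.

Lemma vanN (R : realType) (f : R -> R[i]) : van f -> van (fun t => - f t).
Proof. by move=> vf e e0; apply: ev_imp (vf e e0) => t; rewrite nrmN. Qed.

Lemma vanB (R : realType) (f g : R -> R[i]) : van f -> van g -> van (fun t => f t - g t).
Proof. by move=> vf vg; apply: vanD => //; exact: vanN. Qed.

Lemma vanJ (R : realType) (f : R -> R[i]) : van f -> van (fun t => (f t)^*).
Proof. by move=> vf e e0; apply: ev_imp (vf e e0) => t; rewrite nrmJ. Qed.

Lemma van_bnd (R : realType) (f g : R -> R[i]) (B : R) :
  van f -> ev (fun t => nrm (g t) <= B) -> van (fun t => g t * f t).
Proof.
move=> vf hB e e0.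
have B1 : 0 < `|B| + 1 by rewrite ltr_pwDr // normr_ge0.
have e' : 0 < e / (`|B| + 1) by rewrite divr_gt0.
apply: ev_imp (ev_and hB (vf _ e')) => t [h1 h2].
rewrite nrmM.
have hg : nrm (g t) <= `|B| + 1.
  apply: le_trans h1 _; apply: le_trans (ler_norm B) _; rewrite lerDl //.
apply: le_lt_trans (ler_pM (nrm_ge0 _) (nrm_ge0 _) hg (lexx _)) _.
rewrite -ltr_pdivlMl // mulrC; by rewrite mulrC in h2 *.
Qed.

Lemma van_mulc (R : realType) (f : R -> R[i]) (c : R[i]) : van f -> van (fun t => c * f t).
Proof. move=> vf; apply: (@van_bnd _ f (fun _ => c) (nrm c)) => //; by exists 0. Qed.

Lemma van_sum (R : realType) (I : eqType) (s : seq I) (F : I -> R -> R[i]) :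
  (forall i, i \in s -> van (F i)) -> van (fun t => \sum_(i <- s) F i t).
Proof.
elim: s => [|a s IH] H.
  by move=> e e0; exists 0 => t _; rewrite big_nil /nrm Normc.normc0.
have va := H a (mem_head _ _).
have vs : van (fun t => \sum_(i <- s) F i t).
  by apply: IH => i iS; apply: H; rewrite in_cons iS orbT.
by apply: (van_le (vanD va vs)); exists 0 => t _; rewrite big_cons.
Qed.

Lemma van_sqr (R : realType) (f : R -> R[i]) (h : R -> R[i]) (c : R) :
  0 < c -> van h -> ev (fun t => c * nrm (f t) ^+ 2 <= nrm (h t)) -> van f.
Proof.
move=> c0 vh hle e e0.
have e' : 0 < c * e ^+ 2 by rewrite mulr_gt0 // exprn_gt0.
apply: ev_imp (ev_and hle (vh _ e')) => t [h1 h2].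
have : c * nrm (f t) ^+ 2 < c * e ^+ 2 by apply: le_lt_trans h1 h2.
rewrite ltr_pM2l // => h3.
by rewrite -(@ltr_pXn2r _ 2) // ?nnegrE ?nrm_ge0 ?ltW.
Qed.

Lemma van_coef (R : realType) (P : R -> {poly R[i]}) (N : nat) (y : R[i]) :
  ev (fun t => (size (P t) <= N)%N) -> (forall c, van (fun t => (P t)`_c)) ->
  van (fun t => (P t).[y]).
Proof.
move=> hs hc.
have v2 : van (fun t => \sum_(c < N) (P t)`_c * y ^+ c).
  apply: van_sum => c _.
  apply: (@van_le _ (fun t => y ^+ c * (P t)`_c)); first exact: van_mulc.
  by exists 0 => t _; rewrite !nrmM mulrC.
apply: (van_le v2); apply: ev_imp hs => t hst.
by rewrite (horner_coef_wide _ hst).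
Qed.


Lemma exp_small (R : realType) (d : R) : 0 < d ->
  forall e : R, 0 < e -> ev (fun t => expR (- (t * d)) < e).
Proof.
move=> d0 e e0; exists (1 / (d * e)) => t Ht.
have de : 0 < d * e by rewrite mulr_gt0.
have t0 : 0 < t by apply: lt_le_trans Ht; rewrite divr_gt0.
have h1 : 1 <= t * (d * e) by rewrite -ler_pdivrMr.
rewrite expRN -[(expR _)^-1]mul1r ltr_pdivrMr ?expR_gt0 //.
have h2 := expR_ge1Dx (t * d).
have h3 : 1 < e * (1 + t * d) by nra.
apply: lt_le_trans h3 _; rewrite ler_pM2l //.
Qed.

Lemma van_expR (R : realType) (x cst : R) : x < 0 ->
  van (fun t : R => ((expR (t * x) * cst)%:C)%C).
Proof.
move=> x0 e e0.
have c1 : 0 < `|cst| + 1 by rewrite ltr_pwDr // normr_ge0.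
have e' : 0 < e / (`|cst| + 1) by rewrite divr_gt0.
have d0 : 0 < - x by rewrite oppr_gt0.
apply: ev_imp (ev_and (ev_ge 0) (exp_small d0 e')) => t [t0 h].
rewrite nrmR normrM (ger0_norm (ltW (expR_gt0 _))).
have -> : t * x = - (t * - x) by ring.
have hc : `|cst| <= `|cst| + 1 by rewrite lerDl.
apply: le_lt_trans (ler_pM (ltW (expR_gt0 _)) (normr_ge0 _) (lexx _) hc) _.
by rewrite -ltr_pdivlMr.
Qed.

Lemma k_mono (k : nat -> nat) (L : nat) :
  (forall i, (i < L)%N -> (k i < k i.+1)%N) ->
  forall p q, (p <= q)%N -> (q <= L)%N -> (k p <= k q)%N.
Proof.
move=> Hk p q pq; elim: q pq => [|q IH]; first by rewrite leqn0 => /eqP ->.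
rewrite leq_eqVlt => /orP[/eqP -> //|pq] qL.
apply: leq_trans (IH pq (ltnW qL)) (ltnW (Hk q qL)).
Qed.

Lemma ip_zero (R : rcfType) m x w (P Q : {poly R[i]}) :
  (forall j, (1 <= j <= m)%N -> w j = 0 \/ P.[x j] = 0) -> ip m x w P Q = 0.
Proof.
move=> H; rewrite /ip big_seq; apply: big1 => j; rewrite mem_index_iota ltnS => /H [->|->].
  by rewrite mul0r mul0r.
by rewrite mulr0 mul0r.
Qed.

Lemma sum_gt0 (R : numDomainType) (a b : nat) (F : nat -> R) : (a < b)%N ->
  (forall j, (a <= j < b)%N -> 0 < F j) -> 0 < \sum_(a <= j < b) F j.
Proof.
move=> ab H; rewrite big_ltn // ltr_pwDl //; first by apply: H; rewrite leqnn.
rewrite big_seq; apply: sumr_ge0 => j; rewrite mem_index_iota => /andP[h1 h2].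
by apply: ltW; apply: H; rewrite h2 ltnW.
Qed.

Lemma le_nrm (R : rcfType) (r : R) (y : R[i]) : 0 <= r -> ((r%:C)%C) <= y -> r <= nrm y.
Proof.
move=> r0 ry; have y0 : 0 <= y by apply: le_trans ry; rewrite ler0c.
by rewrite -lecR -normE ger0_norm.
Qed.

Lemma van_ext (R : realType) (f g : R -> R[i]) : (forall t, f t = g t) -> van f -> van g.
Proof. by move=> H vf e e0; apply: ev_imp (vf e e0) => t; rewrite H. Qed.

Lemma ReN2 (R : rcfType) (x : R[i]) : complex.Re (`|x| ^+ 2) = nrm x ^+ 2.
Proof. by rewrite normE -rmorphXn. Qed.

Lemma nrm_gt0 (R : rcfType) (x : R[i]) : x != 0 -> 0 < nrm x.
Proof.
move=> x0; rewrite lt_def nrm_ge0 andbT; apply/eqP => /Normc.eq0_normc.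
by move/eqP: x0.
Qed.

Lemma uniq_mapz (R : rcfType) m (z : nat -> R[i]) (s : seq nat) :
  (forall p q, (1 <= p <= m)%N -> (1 <= q <= m)%N -> z p = z q -> p = q) ->
  (forall j, j \in s -> (1 <= j <= m)%N) -> uniq s -> uniq (map z s).
Proof.
move=> Hinj Hs us; rewrite map_inj_in_uniq // => p q ps qs; exact: Hinj (Hs _ ps) (Hs _ qs).
Qed.


Unset Implicit Arguments.
Theorem theorem3p4 (R : realType) (m : nat) (z : nat -> R[i]) (mu : nat -> R)
    (G : R[i] -> R) (L : nat) (k : nat -> nat) :
  (forall j, (1 <= j <= m)%N -> `|z j| = 1) ->
  (forall p q, (1 <= p <= m)%N -> (1 <= q <= m)%N -> z p = z q -> p = q) ->
  (forall j, (1 <= j <= m)%N -> 0 < mu j) ->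
  \sum_(1 <= j < m.+1) mu j = 1 ->
  (forall p q, (1 <= p <= q)%N -> (q <= m)%N -> G (z q) <= G (z p)) ->
  (* K-groups K_i = {k_{i-1}+1, ..., k_i}, 1 <= i <= L *)
  k 0%N = 0%N -> k L = m ->
  (forall i, (i < L)%N -> (k i < k i.+1)%N) ->
  (forall i p q, (1 <= i <= L)%N -> (k i.-1 < p <= k i)%N ->
     (k i.-1 < q <= k i)%N -> G (z p) = G (z q)) ->
  (forall i, (1 <= i < L)%N -> G (z (k i).+1) < G (z (k i))) ->
  forall (i l : nat), (1 <= i <= L)%N -> (k i.-1 < l <= k i)%N ->
  forall c : nat,
    cvg_pinfty (fun t : R => (Phi m z (mu_t m z mu G t) l)`_c)
      ((\prod_(1 <= p < (k i.-1).+1) ('X - (z p)%:P)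
         * Phi m z (muK z mu (k i.-1) (k i)) (l - k i.-1)%N)`_c).
Proof.
move=> Hz1 Hinj Hmu Hsum Hmono Hk0 HkL Hkinc Hconst Hjump i l Hi Hl c.
have Hconst' := Hconst i _ _ Hi.
set a := k i.-1 in Hl Hconst' *. set b := k i in Hl Hconst' *.
have i1 : (0 < i)%N by case/andP: Hi.
have iL : (i <= L)%N by case/andP: Hi.
have hiS : i = (i.-1).+1 by rewrite prednK.
have hab : (a < b)%N.
  by rewrite /a /b {2}hiS; apply: Hkinc; rewrite -ltnS -hiS.
have hbm : (b <= m)%N by rewrite -HkL; apply: (k_mono Hkinc).
have [hal hlb] : (a < l)%N /\ (l <= b)%N by case/andP: Hl.
have hlm : (l <= m)%N by apply: leq_trans hbm.
have ham : (a <= m)%N by apply: leq_trans (ltnW hab) hbm.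
have l1 : (0 < l)%N by apply: leq_ltn_trans hal.
pose g := G (z b).
have hGK : forall j, (a < j <= b)%N -> G (z j) = g.
  by move=> j hj; apply: Hconst' => //; rewrite hab leqnn.
have hGL : forall j, (1 <= j <= a)%N -> g < G (z j).
  move=> j /andP[j1 ja].
  have a1 : (0 < a)%N by apply: leq_trans ja.
  have i2 : (1 <= i.-1 < L)%N.
    apply/andP; split; last by rewrite -ltnS -hiS.
    rewrite lt0n; apply/eqP => h; move: a1; by rewrite /a h Hk0.
  have := Hjump _ i2; rewrite -/a.
  have -> : G (z a.+1) = g by apply: hGK; rewrite leqnn hab.
  move=> h; apply: lt_le_trans h _; apply: Hmono => //; by rewrite j1 ja.
have hGR : forall j, (b < j <= m)%N -> G (z j) < g.
  move=> j /andP[bj jm].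
  have i2 : (1 <= i < L)%N.
    rewrite i1 /= ltn_neqAle iL andbT; apply/eqP => iLe.
    by move: bj jm; rewrite /b iLe HkL => h1 h2; have := leq_trans h1 h2; rewrite ltnn.
  have := Hjump _ i2; rewrite -/b -/g => h; apply: le_lt_trans h.
  by apply: Hmono => //; rewrite bj.
pose v (t : R) j := expR (t * (G (z j) - g)) * mu j.
pose u j := if (a < j <= b)%N then mu j else 0.
pose hL (t : R) j := if (j <= a)%N then v t j else 0.
pose hR (t : R) j := if (b < j)%N then v t j else 0.
have vK : forall t j, (a < j <= b)%N -> v t j = mu j.
  by move=> t j hj; rewrite /v hGK // subrr mulr0 expR0 mul1r.
have hv : forall t j, (1 <= j <= m)%N -> v t j = u j + (hL t j + hR t j).
  move=> t j _; rewrite /u /hL /hR.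
  case: (leqP j a) => ja /=.
    have -> : (b < j)%N = false by apply/negbTE; rewrite -leqNgt; apply: leq_trans ja (ltnW hab).
    by rewrite add0r addr0.
  case: (leqP j b) => jb /=.
    by rewrite vK ?ja ?jb // addr0 addr0.
  by rewrite !add0r.
have v_ge0 : forall t j, (1 <= j <= m)%N -> 0 <= v t j.
  by move=> t j hj; rewrite mulr_ge0 // ltW ?expR_gt0 ?Hmu.
have u_ge0 : forall j, (1 <= j <= m)%N -> 0 <= u j.
  by move=> j hj; rewrite /u; case: ifP => // _; rewrite ltW ?Hmu.
have hL_ge0 : forall t j, (1 <= j <= m)%N -> 0 <= hL t j.
  by move=> t j hj; rewrite /hL; case: ifP => // _; exact: v_ge0.
have hR_ge0 : forall t j, (1 <= j <= m)%N -> 0 <= hR t j.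
  by move=> t j hj; rewrite /hR; case: ifP => // _; exact: v_ge0.
pose Q t := Phi m z (mu_t m z mu G t) l.
have hQ : forall t, is_monic_OP m z (v t) l (Q t).
  move=> t.
  pose Z := \sum_(1 <= r < m.+1) expR (t * G (z r)) * mu r.
  have Z0 : 0 < Z.
    apply: sum_gt0; first by rewrite ltnS; apply: leq_trans hlm.
    by move=> j hj; rewrite mulr_gt0 ?expR_gt0 // Hmu // -ltnS.
  apply: (@OP_scale _ _ _ (v t) (mu_t m z mu G t) (expR (t * g) / Z)).
  - by rewrite gt_eqF // divr_gt0 ?expR_gt0.
  - move=> j; rewrite /mu_t -/Z /v.
    have -> : t * G (z j) = t * g + t * (G (z j) - g) by ring.
    rewrite expRD; field; exact: lt0r_neq0.
  apply: Phi_spec; apply: (@OP_exists _ _ _ _ _ (iota 1 m)).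
  - move=> j hj; rewrite /mu_t ltW // divr_gt0 ?mulr_gt0 ?expR_gt0 ?Hmu //.
  - move=> j; rewrite mem_iota add1n ltnS => hj; rewrite hj /mu_t.
    by rewrite divr_gt0 ?mulr_gt0 ?expR_gt0 ?Hmu.
  - apply: uniq_mapz Hinj _ (iota_uniq _ _) => j; by rewrite mem_iota add1n ltnS.
  - by rewrite size_iota.
pose W := muK z mu a b.
pose Phn := Phi m z W (l - a).
pose num j := \prod_(1 <= p < a.+1) complex.Re (`|z j - z p| ^+ 2).
pose Cden := \sum_(a.+1 <= r < b.+1) num r * mu r.
have num_gt0 : forall j, (a < j <= m)%N -> 0 < num j.
  move=> j /andP[aj jm]; rewrite /num big_seq; apply: prodr_gt0 => p.
  rewrite mem_index_iota ltnS => /andP[p1 pa].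
  rewrite ReN2 exprn_gt0 // nrm_gt0 // subr_eq0; apply/eqP => /Hinj.
  have hj : (1 <= j <= m)%N by rewrite jm andbT; apply: leq_ltn_trans aj.
  have hp : (1 <= p <= m)%N by rewrite p1 (leq_trans pa ham).
  move=> /(_ hj hp) jp; move: aj; rewrite jp ltnNge; by rewrite pa.
have Cden_gt0 : 0 < Cden.
  apply: sum_gt0; first by rewrite ltnS.
  move=> j /andP[aj jb]; rewrite mulr_gt0 ?num_gt0 ?Hmu //.
    by rewrite aj /= -ltnS (leq_trans jb) // ltnS.
  by rewrite (leq_ltn_trans _ aj) //= -ltnS (leq_trans jb) // ltnS.
have W_def : forall j, W j = if (a < j <= b)%N then num j * mu j / Cden else 0.
  by [].
have W_ge0 : forall j, (1 <= j <= m)%N -> 0 <= W j.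
  move=> j /andP[j1 jm]; rewrite W_def; case: ifP => // /andP[aj jb].
  by rewrite ltW // divr_gt0 // mulr_gt0 ?num_gt0 ?Hmu ?aj ?jm ?j1.
have hPhi : is_monic_OP m z W (l - a) Phn.
  apply: Phi_spec; apply: (@OP_exists _ _ _ _ _ (iota a.+1 (l - a))) => //.
  - move=> j; rewrite mem_iota addSn subnKC ?(ltnW hal) // ltnS => /andP[aj jl].
    have jb : (j <= b)%N by apply: leq_trans hlb.
    have jm : (j <= m)%N by apply: leq_trans hbm.
    rewrite (leq_ltn_trans _ aj) //= jm W_def aj jb /=.
    by rewrite divr_gt0 // mulr_gt0 ?num_gt0 ?Hmu ?aj ?jm // (leq_ltn_trans _ aj).
  - apply: uniq_mapz Hinj _ (iota_uniq _ _) => j.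
    rewrite mem_iota addSn subnKC ?(ltnW hal) // ltnS => /andP[aj jl].
    by rewrite (leq_ltn_trans _ aj) //= (leq_trans jl hlm).
  - by rewrite size_iota.
pose pi := \prod_(1 <= p < a.+1) ('X - (z p)%:P).
have pi_monic : pi \is monic by apply: monic_prod_XsubC.
have pi_size : size pi = a.+1 by rewrite size_prod_XsubC size_iota subn1.
have pi0 : pi != 0 by apply: monic_neq0.
have pi_root : forall p, (1 <= p <= a)%N -> pi.[z p] = 0.
  move=> p hp; rewrite horner_prod (bigD1_seq p) /= ?hornerXsubC ?subrr ?mul0r //.
    by rewrite mem_index_iota ltnS.
  exact: iota_uniq.
have pi_eval : forall j, pi.[z j] * (pi.[z j])^* = ((num j)%:C)%C.
  move=> j; rewrite /num rmorph_prod horner_prod rmorph_prod -big_split /=.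
  apply: eq_bigr => p _; rewrite hornerXsubC -normCK normE -rmorphXn mul0r subr0 expr2 //.
pose Psi := pi * Phn.
have [Phn_monic Phn_size _] := hPhi.
have Psi_monic : Psi \is monic by apply: rpredM.
have Psi_size : size Psi = l.+1.
  rewrite /Psi size_Mmonic // pi_size Phn_size addSn /= addnS subnKC //.
  exact: ltnW.
have Psi_root : forall p, (1 <= p <= a)%N -> Psi.[z p] = 0.
  by move=> p hp; rewrite /Psi hornerM pi_root // mul0r.
have hE : forall X Y, ip m z u (pi * X) (pi * Y) = ((Cden%:C)%C) * ip m z W X Y.
  move=> X Y; rewrite /ip mulr_sumr; apply: eq_bigr => j _.
  rewrite /u W_def; case: ifP => hj; last by rewrite rmorph0 !mul0r mulr0.
  rewrite !hornerM rmorphM.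
  have e1 : ((Cden%:C)%C) * (((num j * mu j / Cden)%:C)%C) = ((num j)%:C)%C * ((mu j)%:C)%C.
    by rewrite -!rmorphM mulrC divfK ?lt0r_neq0.
  rewrite !mulrA e1 -pi_eval; ring.
have [Q_monic Q_size] : (forall t, Q t \is monic) /\ (forall t, size (Q t) = l.+1).
  by split => t; have [] := hQ t.
have hA : forall t, ip m z (v t) Psi Psi
    = ip m z (v t) (Q t) (Q t) + ip m z (v t) (Psi - Q t) (Psi - Q t).
  by move=> t; apply: pythag.
have hdec : forall t (P P' : {poly R[i]}), ip m z (v t) P P'
    = ip m z u P P' + (ip m z (hL t) P P' + ip m z (hR t) P P').
  by move=> t P P'; rewrite (ip_weq _ _ _ (hv t)) !ip_wD.
have hLPsi : forall t, ip m z (hL t) Psi Psi = 0.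
  move=> t; apply: ip_zero => j /andP[j1 jm]; rewrite /hL.
  by case: (leqP j a) => ja; [right; apply: Psi_root; rewrite j1 ja | left].
pose Es := ip m z u Psi Psi.
pose eps t := ip m z (hR t) Psi Psi.
have hB : forall t, ip m z (v t) Psi Psi = Es + eps t.
  by move=> t; rewrite hdec hLPsi add0r.
have van_eps : van eps.
  rewrite /eps /ip; apply: van_sum => j; rewrite mem_index_iota ltnS => /andP[j1 jm].
  rewrite /hR; case: (ltnP b j) => bj.
    apply: (@van_ext _ (fun t => (Psi.[z j] * (Psi.[z j])^*) *
       (((expR (t * (G (z j) - g)) * mu j)%:C)%C))); first by move=> t; rewrite /v; ring.
    by apply: van_mulc; apply: van_expR; rewrite subr_lt0; apply: hGR; rewrite bj jm.
  apply: (@van_ext _ (fun _ => 0)); last exact: van0.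
  by move=> t; rewrite rmorph0 !mul0r.
have Qle : forall t, ip m z (v t) (Q t) (Q t) <= Es + eps t.
  move=> t; rewrite -hB hA lerDl; apply: ip_ge0; exact: v_ge0.
have Qterm : forall t j, (1 <= j <= m)%N ->
    v t j * nrm ((Q t).[z j]) ^+ 2 <= nrm Es + nrm (eps t).
  move=> t j hj; apply: le_trans (nrmD _ _); apply: le_nrm.
    by rewrite mulr_ge0 ?v_ge0 // exprn_ge0 // nrm_ge0.
  apply: le_trans (Qle t); apply: le_trans (ip_term_le z (Q t) (v_ge0 t) hj).
  by rewrite normE -rmorphXn -rmorphM.
have ev_eps1 : ev (fun t => nrm (eps t) < 1) by apply: van_eps; exact: ltr01.
pose M := nrm Es + 1.
have M0 : 0 < M by rewrite ltr_pwDr ?nrm_ge0.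
have vanQa : forall p, (1 <= p <= a)%N -> van (fun t => (Q t).[z p]).
  move=> p hp.
  have hpm : (1 <= p <= m)%N by case/andP: hp => -> /= h; apply: leq_trans h ham.
  have d0 : 0 < G (z p) - g by rewrite subr_gt0; apply: hGL.
  apply: (@van_sqr _ _ (fun t => ((expR (t * (- (G (z p) - g))) * M)%:C)%C) (mu p)).
  - exact: Hmu.
  - by apply: van_expR; rewrite oppr_lt0.
  apply: ev_imp ev_eps1 => t h1.
  have h2 := Qterm t p hpm; rewrite /v in h2.
  rewrite nrmR ger0_norm; last by rewrite mulr_ge0 // ltW ?expR_gt0.
  have e1 : expR (t * (G (z p) - g)) * expR (t * - (G (z p) - g)) = 1.
    by rewrite -expRD mulrN subrr expR0.
  have E1 := expR_gt0 (t * (G (z p) - g)).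
  have E2 := expR_gt0 (t * - (G (z p) - g)).
  have n2 := nrm_ge0 ((Q t).[z p]).
  have mp := Hmu p hpm.
  set X := mu p * nrm (Q t).[z p] ^+ 2 in h2 *.
  have X0 : 0 <= X by rewrite /X mulr_ge0 ?exprn_ge0 // ltW.
  set e2 := expR (t * - (G (z p) - g)) in e1 E2 *.
  set e1' := expR (t * (G (z p) - g)) in h2 e1 E1 *.
  have h3 : e1' * X <= M by rewrite /M mulrA; lra.
  nra.
pose r t := Q t %% pi.
pose Sq t := Q t %/ pi.
have hQdec : forall t, Q t = Sq t * pi + r t by move=> t; exact: divp_eq.
have hr_size : forall t, (size (r t) <= a)%N.
  by move=> t; rewrite -ltnS -pi_size ltn_modp.
have hr_eval : forall t p, (1 <= p <= a)%N -> (r t).[z p] = (Q t).[z p].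
  by move=> t p hp; rewrite [in RHS](hQdec t) hornerD hornerM pi_root // mulr0 add0r.
have van_rc : forall cc, van (fun t => (r t)`_cc).
  move=> cc.
  pose sa := map z (iota 1 a).
  have usa : uniq sa.
    by apply: uniq_mapz Hinj _ (iota_uniq _ _) => j; rewrite mem_iota add1n ltnS => /andP[-> /leq_trans ->].
  have ssa : size sa = a by rewrite size_map size_iota.
  apply: (@van_ext _ (fun t => \sum_(y <- sa) (r t).[y] * (Lag sa y)`_cc)).
    by move=> t; rewrite -interp_coef // ssa.
  apply: van_sum => y /mapP [p]; rewrite mem_iota add1n ltnS => hp ->.
  apply: (@van_ext _ (fun t => (Lag sa (z p))`_cc * (Q t).[z p])).
    by move=> t; rewrite hr_eval // mulrC.
  by apply: van_mulc; exact: vanQa.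
have van_r : forall y, van (fun t => (r t).[y]).
  move=> y; apply: (@van_coef _ _ a) => //; by exists 0 => t _.
have Qbnd : forall j, (a < j <= b)%N -> ev (fun t => nrm ((Q t).[z j]) <= 1 + M / mu j).
  move=> j hj.
  have hjm : (1 <= j <= m)%N.
    by case/andP: hj => aj jb; rewrite (leq_ltn_trans _ aj) //= (leq_trans jb hbm).
  have mj := Hmu j hjm.
  apply: ev_imp ev_eps1 => t h1.
  have h2 := Qterm t j hjm; rewrite vK // in h2.
  have n0 := nrm_ge0 ((Q t).[z j]).
  have h3 : nrm ((Q t).[z j]) ^+ 2 <= M / mu j.
    by rewrite ler_pdivlMr // mulrC /M; lra.
  set n := nrm _ in n0 h3 *.
  have : n <= 1 + n ^+ 2 by nra.
  lra.
have hSp : forall t, Sq t * pi = Q t - r t by move=> t; rewrite [in RHS](hQdec t) addrK.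
pose Xc t := ip m z u (Sq t * pi) (r t) + ip m z u (r t) (Sq t * pi) + ip m z u (r t) (r t).
have van_Xc : van Xc.
  have h1 : van (fun t => ip m z u (Sq t * pi) (r t)).
    rewrite /ip; apply: van_sum => j; rewrite mem_index_iota ltnS => hj.
    rewrite /u; case: ifP => hK; last first.
      apply: (@van_ext _ (fun _ => 0)); last exact: van0.
      by move=> t; rewrite rmorph0 !mul0r.
    apply: (@van_bnd _ _ _ (`|mu j| * (1 + M / mu j + 1))); first exact/vanJ/van_r.
    apply: ev_imp (ev_and (Qbnd j hK) (van_r (z j) 1 ltr01)) => t [h1 h2].
    rewrite nrmM nrmR hSp hornerD hornerN; apply: ler_wpM2l; first exact: normr_ge0.
    apply: le_trans (nrmD _ _) _; rewrite nrmN; apply: lerD => //; exact: ltW.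
  have h2 : van (fun t => ip m z u (r t) (Sq t * pi)).
    by apply: (van_ext _ (vanJ h1)) => t; rewrite -ip_conj.
  have h3 : van (fun t => ip m z u (r t) (r t)).
    rewrite /ip; apply: van_sum => j _.
    apply: (@van_bnd _ _ _ (`|u j|)); first exact/vanJ/van_r.
    apply: ev_imp (van_r (z j) 1 ltr01) => t h.
    rewrite nrmM nrmR -[X in _ <= X]mulr1; apply: ler_wpM2l; first exact: normr_ge0.
    exact: ltW.
  by apply: vanD => //; apply: vanD.
have Sq_prop : forall t, Sq t \is monic /\ size (Sq t) = (l - a).+1.
  move=> t.
  have Sq0 : Sq t != 0.
    apply/negP => /eqP h0; have := hr_size t; have := hQdec t; rewrite h0 mul0r add0r => <-.
    by rewrite Q_size ltnNge ltnW.
  have sSp : size (Sq t * pi) = (size (Sq t) + a)%N by rewrite size_Mmonic // pi_size addnS.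
  have sr : (size (r t) < size (Sq t * pi)%R)%N.
    rewrite sSp; apply: leq_ltn_trans (hr_size t) _; rewrite -{1}(add0n a) ltn_add2r lt0n size_poly_eq0.
    exact: Sq0.
  have eQ : size (Q t) = size (Sq t * pi) by rewrite [in LHS](hQdec t) (size_polyDl sr).
  split.
    have := Q_monic t; rewrite !monicE (hQdec t) lead_coefDl //.
    by rewrite lead_coef_Mmonic.
  move: eQ; rewrite Q_size sSp => h; move: hal; lia.
have key : forall t j, (a < j <= b)%N ->
    mu j * nrm ((Psi - Q t).[z j]) ^+ 2 <= nrm (eps t - Xc t).
  move=> t j hj.
  have hjm : (1 <= j <= m)%N.
    by case/andP: hj => aj jb; rewrite (leq_ltn_trans _ aj) //= (leq_trans jb hbm).
  have [Sq_monic Sq_size] := Sq_prop t.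
  apply: le_nrm; first by rewrite mulr_ge0 ?exprn_ge0 ?nrm_ge0 // ltW ?Hmu.
  set D := Psi - Q t.
  have uj : u j = mu j by rewrite /u hj.
  have h1 : (((mu j * nrm D.[z j] ^+ 2)%:C)%C) <= ip m z u D D.
    apply: le_trans (ip_term_le z D u_ge0 hjm).
    by rewrite uj normE -rmorphXn -rmorphM.
  have h2 : forall P, ip m z u P P <= ip m z (v t) P P.
    move=> P; rewrite hdec lerDl addr_ge0 // ip_ge0 // => j' hj'.
      exact: hL_ge0.
    exact: hR_ge0.
  have h3 : ip m z (v t) D D = ip m z (v t) Psi Psi - ip m z (v t) (Q t) (Q t).
    by rewrite hA; ring.
  have h5 : ip m z u (Q t) (Q t) = ip m z u (Sq t * pi) (Sq t * pi) + Xc t.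
    by rewrite [in LHS](hQdec t) ipDl !ipDr /Xc; ring.
  have h6 : Es <= ip m z u (Sq t * pi) (Sq t * pi).
    rewrite (mulrC (Sq t)) hE (pythag hPhi Sq_monic Sq_size) /Es /Psi hE mulrDr lerDl.
    by rewrite mulr_ge0 ?ip_ge0 // ler0c ltW.
  have h7 : Es + Xc t <= ip m z (v t) (Q t) (Q t).
    apply: le_trans (h2 (Q t)); rewrite h5 lerD2r //.
  apply: le_trans h1 _; apply: le_trans (h2 D) _; rewrite h3 hB.
  have -> : eps t - Xc t = Es + eps t - (Es + Xc t) by ring.
  by apply: lerB.
have van_PQ : forall j, (a < j <= b)%N -> van (fun t => (Psi - Q t).[z j]).
  move=> j hj.
  have hjm : (1 <= j <= m)%N.
    by case/andP: hj => aj jb; rewrite (leq_ltn_trans _ aj) //= (leq_trans jb hbm).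
  apply: (@van_sqr _ _ (fun t => eps t - Xc t) (mu j)); first exact: Hmu.
    exact: vanB.
  by exists 0 => t _; apply: key.
pose Dt t := Q t - Psi.
have hDsize : forall t, (size (Dt t) <= l)%N.
  by move=> t; apply: size_sub_monic.
have van_Dz : forall j, (1 <= j <= b)%N -> van (fun t => (Dt t).[z j]).
  move=> j /andP[j1 jb]; case: (leqP j a) => ja.
    apply: (@van_ext _ (fun t => (Q t).[z j])); last by apply: vanQa; rewrite j1.
    by move=> t; rewrite /Dt hornerD hornerN Psi_root ?j1 // subr0.
  apply: (@van_ext _ (fun t => - (Psi - Q t).[z j])); last by apply/vanN/van_PQ; rewrite ja.
  by move=> t; rewrite /Dt -hornerN opprB.
have van_Dc : van (fun t => (Dt t)`_c).
  pose sb := map z (iota 1 b).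
  have usb : uniq sb.
    by apply: uniq_mapz Hinj _ (iota_uniq _ _) => j; rewrite mem_iota add1n ltnS => /andP[-> /leq_trans ->].
  have ssb : size sb = b by rewrite size_map size_iota.
  apply: (@van_ext _ (fun t => \sum_(y <- sb) (Dt t).[y] * (Lag sb y)`_c)).
    by move=> t; rewrite -interp_coef // ssb (leq_trans (hDsize t)).
  apply: van_sum => y /mapP [p]; rewrite mem_iota add1n ltnS => hp ->.
  apply: (@van_ext _ (fun t => (Lag sb (z p))`_c * (Dt t).[z p])).
    by move=> t; rewrite mulrC.
  by apply: van_mulc; exact: van_Dz.
move=> e e0; have [T HT] := van_Dc e e0; exists T => t /HT.
by rewrite /Dt coefB normE ltcR.
Qed.
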